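(* Let $G$ be a connected graph, $k \ge 2$ an integer, and $\Pi_1, \Pi_2 \in \mathrm{Part}(G,k)$. Then there exists a block vertex $v \in V(G)$ such that a sequence of at most three recombination moves transforms $\Pi_1$ into a connected $k$-partition in which $\{v\}$ is a district, and a sequence of at most three recombination moves transforms $\Pi_2$ into a connected $k$-partition in which $\{v\}$ is a district.
   Context: For a graph $G$ and positive integer $k$, a connected $k$-partition of $G$ is a partition of $V(G)$ into $k$ disjoint nonempty sets $V_1,\dots,V_k$ (called districts) such that each induced subgraph $G[V_i]$ is connected; $\mathrm{Part}(G,k)$ denotes the set of all connected $k$-partitions of $G$. Two distinct connected $k$-partitions $\{V_1,\dots,V_k\}$ and $\{W_1,\dots,W_k\}$ are related by a recombination move if there are indices $i,j$ and a permutation $\pi$ of $\{1,\dots,k\}$ with $V_i \cup V_j = W_{\pi(i)} \cup W_{\pi(j)}$ and $V_\ell = W_{\pi(\ell)}$ for all $\ell \notin \{i,j\}$ (here there is no size restriction on districts). A block is a maximal biconnected component; a vertex is a cut vertex if it lies in two or more blocks, and a block vertex otherwise. *)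

(* Defs.v *)
From mathcomp Require Import all_boot.
Set Implicit Arguments. Unset Strict Implicit. Unset Printing Implicit Defensive.

Section Graphs.
Variables (T : finType) (e : rel T).

Definition simple_graph : Prop := symmetric e /\ irreflexive e.

Definition induced_rel (A : {set T}) : rel T :=
  [rel x y | [&& e x y, x \in A & y \in A]].

Definition connected_in (A : {set T}) : Prop :=
  A != set0 /\ forall x y, x \in A -> y \in A -> connect (induced_rel A) x y.

Definition connected_graph : Prop := connected_in [set: T].

(* G[B] is biconnected: connected and without a cut vertex of its own
   (K1 and K2 count as biconnected, as usual) *)
Definition biconnected (B : {set T}) : Prop :=
  connected_in B /\ forall x, x \in B -> B :\ x != set0 -> connected_in (B :\ x).

Definition is_block (B : {set T}) : Prop :=
  biconnected B /\ forall B' : {set T}, B \subset B' -> biconnected B' -> B' = B.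

Definition cut_vertex (v : T) : Prop :=
  exists B1 B2 : {set T}, [/\ is_block B1, is_block B2, B1 != B2, v \in B1 & v \in B2].

Definition block_vertex (v : T) : Prop := ~ cut_vertex v.

Definition conn_kpart (k : nat) (P : {set {set T}}) : Prop :=
  [/\ partition P [set: T], #|P| = k & forall A, A \in P -> connected_in A].

(* one recombination move (districts of P other than A, B are kept, A u B
   is re-split into C, D); the sets-of-sets representation absorbs the
   permutation pi *)
Definition recomb_move (k : nat) (P Q : {set {set T}}) : Prop :=
  [/\ conn_kpart k P, conn_kpart k Q, P != Q &
   exists A B C D : {set T}, [/\ [/\ A \in P, B \in P, C \in Q & D \in Q],
       A != B, C != D, A :|: B = C :|: D &
       (P :\ A) :\ B = (Q :\ C) :\ D]].

Fixpoint recomb_within (k n : nat) (P Q : {set {set T}}) : Prop :=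
  match n with
  | 0 => P = Q
  | n'.+1 => P = Q \/ exists R, recomb_move k P R /\ recomb_within k n' R Q
  end.

End Graphs.

(* Main.v *)
Require Import Defs.
From mathcomp Require Import all_boot zify.
Set Implicit Arguments. Unset Strict Implicit. Unset Printing Implicit Defensive.


Section Basic.
Variables (T : finType) (e : rel T) (esym : symmetric e).

Notation ind := (induced_rel e).
Implicit Types (S Z X : {set T}) (x y : T).

Lemma indE S p q : ind S p q = [&& e p q, p \in S & q \in S].
Proof. by []. Qed.

Lemma ind_sym S : symmetric (ind S).
Proof.
move=> x y; rewrite /induced_rel /= esym.
by case: (x \in S); case: (y \in S); rewrite ?andbF ?andbT.
Qed.

Lemma csym S x y : connect (ind S) x y = connect (ind S) y x.
Proof. exact: (sym_connect_sym (ind_sym S)). Qed.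

Lemma cmono S S' x y : S \subset S' -> connect (ind S) x y -> connect (ind S') x y.
Proof.
move=> /subsetP sS; apply: connect_sub => p q /and3P[epq pS qS].
by apply: connect1; rewrite /induced_rel /= epq !sS.
Qed.

Lemma cmem S x y : connect (ind S) x y -> x \in S -> y \in S.
Proof.
move/connectP=> [p pth ->]; elim: p x pth => [|z p IH] x //= /andP[/and3P[_ _ zS] pth] _.
exact: IH.
Qed.

Lemma cmem2 S x y : connect (ind S) x y -> x != y -> x \in S.
Proof.
move/connectP=> [[|z p] pth ->] /=; first by rewrite eqxx.
by case/andP: pth => /and3P[].
Qed.

Lemma cross S (X : {set T}) x y : connect (ind S) x y -> x \in X -> y \notin X ->
  exists p q, [/\ p \in X, q \notin X & ind S p q].
Proof.
move/connectP=> [p pth ->]; elim: p x pth => [|z p IH] x /=.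
  by move=> _ ->; rewrite /= => ?.
case/andP=> exz pth Hx Hy; case: (boolP (z \in X)) => Hz.
  exact: (IH z pth Hz Hy).
by exists x, z.
Qed.

Lemma crestrict S (Z : {set T}) x y :
  (forall p q, p \in Z -> ind S p q -> q \in Z) ->
  connect (ind S) x y -> x \in Z -> connect (ind Z) x y.
Proof.
move=> cl /connectP[p pth ->]; elim: p x pth => [|z p IH] x /=.
  by move=> _ _; exact: connect0.
case/andP=> exz pth Hx; have Hz := cl _ _ Hx exz.
apply: connect_trans (IH _ pth Hz); apply: connect1.
by move: exz; rewrite /induced_rel /= Hx Hz => /and3P[-> _ _].
Qed.

Definition conn (S : {set T}) : bool :=
  [forall x in S, forall y in S, connect (ind S) x y].

Lemma connP S : reflect (forall x y, x \in S -> y \in S -> connect (ind S) x y) (conn S).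
Proof.
apply: (iffP forall_inP) => [H x y xS yS | H x xS].
  by have /forall_inP := H x xS; apply.
by apply/forall_inP => y yS; apply: H.
Qed.

Lemma connectedE S : connected_in e S <-> S != set0 /\ conn S.
Proof.
split=> [[ne H] | [ne /connP H]]; split=> //; exact/connP.
Qed.

Lemma conn_of S : connected_in e S -> conn S.
Proof. by case/connectedE. Qed.

Lemma conn_to S : S != set0 -> conn S -> connected_in e S.
Proof. by move=> ne c; apply/connectedE. Qed.

Definition ccomp (S : {set T}) x := [set y in S | connect (ind S) x y].

Lemma GL (A : {set T}) : conn A -> 1 < #|A| ->
  exists c x, [/\ c \in A, x \in A :\ c & forall u, u \in ccomp (A :\ c) x -> conn (A :\ u)].
Proof.
move=> cA cardA.
pose Pp := fun p : T * T => (p.1 \in A) && (p.2 \in A :\ p.1).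
have [x0 [y0 [x0A y0A nxy]]] : exists x y, [/\ x \in A, y \in A & x != y].
  have [x0 x0A] : exists x, x \in A.
    by apply/set0Pn; rewrite -card_gt0; apply: ltnW.
  have : 0 < #|A :\ x0| by rewrite (cardsD1 x0 A) x0A in cardA.
  rewrite card_gt0 => /set0Pn[y0]; rewrite !inE => /andP[nyx y0A].
  by exists x0, y0; split=> //; rewrite eq_sym.
have P0 : Pp (x0, y0) by rewrite /Pp /= x0A !inE y0A eq_sym nxy.
case: (arg_minnP (fun p => #|ccomp (A :\ p.1) p.2|) P0) => [[c x]] /andP[/= cA' xA] minK.
exists c, x; split=> // u uK; apply/connP => y z yA zA.
have uAc : u \in A :\ c by move: uK; rewrite inE => /andP[].
have cAu : c \in A :\ u.
  by rewrite !inE cA' andbT; move: uAc; rewrite !inE eq_sym => /andP[].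
have key : forall w, w \in A :\ u -> ~~ connect (ind (A :\ u)) c w -> False.
  move=> w wAu ncw.
  have Pw : Pp (u, w).
    by rewrite /Pp /= wAu andbT; move: uAc; rewrite inE => /andP[].
  have := minK _ Pw; rewrite /= => leK.
  set K' := ccomp (A :\ u) w in leK.
  set K := ccomp (A :\ c) x in leK uK.
  have wK' : w \in K' by rewrite inE wAu connect0.
  have cK' : c \notin K' by rewrite inE csym (negbTE ncw) andbF.
  have clK' : forall p q, p \in K' -> ind (A :\ u) p q -> q \in K'.
    move=> p q pK pq; have := pq; rewrite /induced_rel /= => /and3P[_ _ qA].
    rewrite inE qA /=; move: pK; rewrite inE => /andP[_ wp].
    exact: connect_trans wp (connect1 pq).
  have K'sub : K' \subset A :\ c.
    apply/subsetP => t tK'; rewrite !inE.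
    have := tK'; rewrite !inE => /andP[/andP[_ ->] _]; rewrite andbT.
    by apply: contraNneq cK' => <-.
  have wA : w \in A by move: wAu; rewrite inE => /andP[].
  have [p [q [pK qK pq]]] := cross (connP _ cA w c wA cA') wK' cK'.
  have qu : q = u.
    apply/eqP; apply: contraNT qK => qu.
    apply: (clK' p) => //; move: pq => /and3P[epq pA' qA'].
    have pAu : p \in A :\ u by move: pK; rewrite inE => /andP[].
    by rewrite indE epq pAu !inE qu qA'.
  subst q.
  have conw : forall t, t \in K' -> connect (ind (A :\ c)) w t.
    move=> t tK'; apply: (cmono K'sub); apply: (crestrict clK') => //.
    by move: tK'; rewrite inE => /andP[].
  have xu : connect (ind (A :\ c)) x u by move: uK; rewrite inE => /andP[].
  have pAc : p \in A :\ c by move/subsetP: K'sub; apply.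
  have xw : connect (ind (A :\ c)) x w.
    apply: connect_trans xu _; rewrite csym; apply: connect_trans (conw p pK) _.
    apply: connect1; move: pq => /and3P[epq _ _]; by rewrite indE epq pAc uAc.
  have sub : K' \proper K.
    rewrite properE; apply/andP; split.
      apply/subsetP => t tK'; rewrite inE (subsetP K'sub _ tK') /=.
      exact: connect_trans xw (conw t tK').
    apply/subsetPn; exists u => //; rewrite inE !inE eqxx //.
  by have := proper_card sub; rewrite ltnNge leK.
case: (boolP (connect (ind (A :\ u)) c y)) => cy; last by case: (key y yA cy).
case: (boolP (connect (ind (A :\ u)) c z)) => cz; last by case: (key z zA cz).
by rewrite csym in cy; apply: connect_trans cy cz.
Qed.

End Basic.


Section NC.
Variables (T : finType) (e : rel T) (esym : symmetric e).
Notation ind := (induced_rel e).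
Implicit Types (S Z X W : {set T}) (x y : T).

Lemma path_in Z a p : path (ind Z) a p -> a \in Z -> {subset a :: p <= Z}.
Proof.
elim: p a => [|z p IH] a /=; first by move=> _ aZ y; rewrite inE => /eqP->.
case/andP=> az pth aZ y; rewrite inE => /orP[/eqP->//|yp].
have zZ : z \in Z by move: az; rewrite indE => /and3P[].
exact: (IH z pth zZ y yp).
Qed.

Lemma path_sub Z Z' a p : path (ind Z) a p -> {subset a :: p <= Z'} -> path (ind Z') a p.
Proof.
elim: p a => [|z p IH] a //= /andP[az pth] sub; apply/andP; split.
  have aZ' : a \in Z' by apply: sub; rewrite inE eqxx.
  have zZ' : z \in Z' by apply: sub; rewrite !inE eqxx orbT.
  by move: az; rewrite !indE aZ' zZ' => /and3P[-> _ _].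
apply: (IH z pth) => y yp; apply: sub; by rewrite inE yp orbT.
Qed.

Lemma path_avoid Z x z p : path (ind Z) z p -> z \in Z -> x \notin z :: p ->
  connect (ind (Z :\ x)) z (last z p).
Proof.
elim: p z => [|w p IH] z /=; first by move=> _ _ _; exact: connect0.
case/andP=> zw pth zZ; rewrite !inE negb_or => /andP[zx /norP[wx xp]].
have wZ : w \in Z by move: zw; rewrite indE => /and3P[].
apply: connect_trans (IH _ pth wZ _); last by rewrite inE negb_or wx xp.
rewrite eq_sym in zx; rewrite eq_sym in wx.
apply: connect1; move: zw; rewrite !indE !inE => /and3P[-> -> ->].
by rewrite zx wx.
Qed.

Lemma psplit Z x a p y : path (ind Z) a p -> uniq (a :: p) -> a \in Z ->
  y \in a :: p -> y != x ->
  connect (ind (Z :\ x)) y a || connect (ind (Z :\ x)) y (last a p).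
Proof.
elim: p a => [|z p IH] a /=.
  by move=> _ _ _; rewrite inE => /eqP-> _; rewrite connect0.
case/andP=> az pth /andP[anz un] aZ; rewrite inE => /orP[/eqP-> _|yzp yx].
  by rewrite connect0.
have zZ : z \in Z by move: az; rewrite indE => /and3P[].
have yZ : y \in Z by apply: (path_in pth zZ).
have := IH z pth un zZ yzp yx; case/orP => [yz|->]; last by rewrite orbT.
have yZx : y \in Z :\ x by rewrite !inE yx yZ.
have zx : z != x.
  apply/eqP => zx; subst z.
  by have := cmem yz yZx; rewrite !inE eqxx.
case: (eqVneq a x) => [ax|ax].
  subst a; apply/orP; right; apply: connect_trans yz _.
  by apply: path_avoid.
apply/orP; left; apply: connect_trans yz _; apply: connect1.
by move: az; rewrite !indE !inE => /and3P[]; rewrite esym => -> -> ->; rewrite zx ax.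
Qed.

Lemma hub_conn W h : h \in W -> (forall y, y \in W -> connect (ind W) y h) -> conn e W.
Proof.
move=> hW H; apply/connP => y z yW zW.
by apply: connect_trans (H y yW) _; rewrite (csym esym); apply: H.
Qed.

Lemma NC v : conn e ([set: T] :\ v) -> block_vertex e v.
Proof.
move=> cG [B1 [B2 [[[c1 bc1] max1] [[c2 bc2] max2] n12 vB1 vB2]]].
have nsub : forall B B' : {set T}, biconnected e B -> 
   (forall B'' : {set T}, B' \subset B'' -> biconnected e B'' -> B'' = B') ->
   B != B' -> exists y, y \in B' /\ y \notin B.
  move=> B B' bB mB' nBB'; case: (boolP (B' \subset B)) => [sub|].
    by move: nBB'; rewrite (mB' _ sub bB) eqxx.
  by case/subsetPn => y yB' yB; exists y.
have [b [bB2 bB1]] := nsub _ _ (conj c1 bc1) max2 n12.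
have n21 : B2 != B1 by rewrite eq_sym.
have [a [aB1 aB2]] := nsub _ _ (conj c2 bc2) max1 n21.
have av : a != v by apply: contraNneq aB2 => ->.
have bv : b != v by apply: contraNneq bB1 => ->.
have aG : a \in [set: T] :\ v by rewrite !inE av.
have bG : b \in [set: T] :\ v by rewrite !inE bv.
have [p [pth un lastp]] : exists p, [/\ path (ind ([set: T] :\ v)) a p, uniq (a :: p) & last a p = b].
  move/connP: cG => /(_ a b aG bG) /connectP[p0 pth0 ->].
  by case/shortenP: pth0 => p pth un _; exists p.
pose S := B1 :|: B2 :|: [set y | y \in a :: p].
have B1S : B1 \subset S by apply/subsetP => y yB; rewrite !inE yB.
have B2S : B2 \subset S by apply/subsetP => y yB; rewrite !inE yB orbT.
have pS : forall y, y \in a :: p -> y \in S :\ v.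
  move=> y yp; have : y \in [set: T] :\ v by apply: (path_in pth aG).
  rewrite in_setD1 => /andP[yv _].
  by rewrite /S in_setD1 yv /= !in_setU in_set yp !orbT.
have pthZ : path (ind (S :\ v)) a p by apply: path_sub pth _.
have aZ : a \in S :\ v by apply: pS; rewrite inE eqxx.
have onp : forall x y, y \in a :: p -> y != x -> y != v ->
    (connect (ind (S :\ v :\ x)) y a /\ a != x) \/ (connect (ind (S :\ v :\ x)) y b /\ b != x).
  move=> x y yp yx yv.
  have yZ : y \in S :\ v :\ x by rewrite in_setD1 yx pS.
  have := psplit pthZ un aZ yp yx; rewrite lastp => /orP[ya|yb].
    left; split=> //; have := cmem ya yZ; rewrite !inE => /andP[]; by rewrite eq_sym.
  right; split=> //; have := cmem yb yZ; rewrite !inE => /andP[]; by rewrite eq_sym.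
have subZ : forall x, S :\ v :\ x \subset S :\ x.
  by move=> x; apply/subsetP => y; rewrite !inE => /and3P[-> _ ->].
have bicB : forall B x y, biconnected e B -> x \in B -> y \in B :\ x -> forall t, t \in B :\ x ->
    connect (ind (B :\ x)) y t.
  move=> B x y [_ bcB] xB yB t tB.
  have ne : B :\ x != set0 by apply/set0Pn; exists y.
  by have /connP := conn_of (bcB x xB ne); apply.
have conS : forall x, x \in S -> x != v -> conn e (S :\ x).
  move=> x xS xv; apply: (hub_conn (h := v)); first by rewrite !inE eq_sym xv vB1.
  have gen : forall B y, biconnected e B -> v \in B -> B \subset S -> y \in B -> y != x -> connect (ind (S :\ x)) y v.
    move=> B y bB vB BS yB yx; case: (boolP (x \in B)) => xB.
      apply: (cmono (S := B :\ x)); first by apply/subsetP => t; rewrite !in_setD1 => /andP[-> /(subsetP BS) ->].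
      by apply: (bicB B x y bB xB); rewrite !inE ?yx ?yB // eq_sym xv.
    apply: (cmono (S := B)); first by apply/subsetP => t tB; rewrite in_setD1 (subsetP BS _ tB) andbT; apply: contraNneq xB => <-.
    by have /connP := conn_of (proj1 bB); apply.
  move=> y; rewrite in_setD1 => /andP[yx yS].
  move: yS; rewrite !inE -orbA => /or3P[yB|yB|yp].
  - exact: (gen B1 y (conj c1 bc1) vB1 B1S yB yx).
  - exact: (gen B2 y (conj c2 bc2) vB2 B2S yB yx).
  have yv : y != v.
    by have := pS y yp; rewrite !inE => /andP[].
  have [[ya ax]|[yb bx]] := onp x y yp yx yv.
    apply: connect_trans (cmono (subZ x) ya) _.
    exact: (gen B1 a (conj c1 bc1) vB1 B1S aB1 ax).
  apply: connect_trans (cmono (subZ x) yb) _.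
  exact: (gen B2 b (conj c2 bc2) vB2 B2S bB2 bx).
have pab : connect (ind (S :\ v)) a b by apply/connectP; exists p.
have subv : S :\ v :\ v \subset S :\ v by apply/subsetP => y; rewrite in_setD1 => /andP[].
have conSv : conn e (S :\ v).
  apply: (hub_conn aZ) => y; rewrite in_setD1 => /andP[yv yS].
  move: yS; rewrite !inE -orbA => /or3P[yB|yB|yp].
  - apply: (cmono (S := B1 :\ v)); first by apply/subsetP => t; rewrite !in_setD1 => /andP[-> /(subsetP B1S) ->].
    by apply: (bicB B1 v y (conj c1 bc1) vB1); rewrite !inE ?yv ?yB ?av.
  - apply: connect_trans (_ : connect _ y b) _; last by rewrite (csym esym).
    apply: (cmono (S := B2 :\ v)); first by apply/subsetP => t; rewrite !in_setD1 => /andP[-> /(subsetP B2S) ->].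
    by apply: (bicB B2 v y (conj c2 bc2) vB2); rewrite !inE ?yv ?yB ?bv.
  have [[ya _]|[yb _]] := onp v y yp yv yv.
    exact: (cmono subv ya).
  apply: connect_trans (cmono subv yb) _; by rewrite (csym esym).
have bS : biconnected e S.
  split.
    apply: conn_to; first by apply/set0Pn; exists v; rewrite !inE vB1.
    apply: (hub_conn (h := v)); first by rewrite !inE vB1.
    move=> y yS; case: (eqVneq y b) => [->|yb].
      apply: (cmono B2S); by have /connP := conn_of c2; apply.
    have bS : b \in S by rewrite !inE bB2 orbT.
    apply: (cmono (S := S :\ b)); first by apply/subsetP => t; rewrite in_setD1 => /andP[].
    have /connP := conS b bS bv; apply; first by rewrite in_setD1 yb yS.
    by rewrite in_setD1 eq_sym bv !inE vB1.
  move=> x xS ne; apply: conn_to => //.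
  case: (eqVneq x v) => [->|xv]; [exact: conSv | exact: conS].
have := max1 S B1S bS => SB1.
by move: bB1; rewrite -SB1 !inE bB2 orbT.
Qed.
End NC.


Section Moves.
Variables (T : finType) (e : rel T) (esym : symmetric e).
Notation ind := (induced_rel e).
Implicit Types (S Z X W A B C D : {set T}) (x y : T) (P Q R : {set {set T}}).

Lemma swap k P A B C D : conn_kpart e k P -> A \in P -> B \in P -> A != B ->
  connected_in e C -> connected_in e D -> [disjoint C & D] -> C :|: D = A :|: B ->
  C != A -> C != B -> recomb_move e k P ((P :\ A :\ B) :|: [set C; D]).
Proof.
move=> [/and3P[/eqP covP trP nP] cardP connP] AP BP nAB cC cD dCD CD nCA nCB.
set R := P :\ A :\ B; set Q := R :|: [set C; D].
have h1 := cardsD1 A P; rewrite AP cardP in h1.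
have h2 := cardsD1 B (P :\ A); rewrite in_setD1 BP eq_sym nAB in h2.
have cardR : #|R| = k - 2 by rewrite /R h1 h2 add1n add1n subSS subSS subn0.
have k2 : 2 <= k by rewrite h1 h2.
have Qdef : forall X, (X \in Q) = [|| X \in R, X == C | X == D].
  by move=> X; rewrite /Q in_setU in_set2.
have QCD : Q :\ C :\ D = P :\ A :\ B -> Q :\ C :\ D = R by [].
have Rdef : forall X, (X \in R) = [&& X != B, X != A & X \in P].
  by move=> X; rewrite /R !in_setD1.
have RE : R = P :\ A :\ B by [].
clearbody R.
have RP : forall X, X \in R -> [/\ X \in P, X != A & X != B].
  by move=> X; rewrite Rdef => /and3P[-> -> ->].
have disjR : forall X x, X \in R -> x \in X -> x \notin A :|: B.
  move=> X x /RP[XP XA XB] xX; rewrite in_setU negb_or; apply/andP; split.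
    have := trivIsetP trP X A XP AP XA; move/disjointFr; by move/(_ x xX) ->.
  have := trivIsetP trP X B XP BP XB; move/disjointFr; by move/(_ x xX) ->.
have neC : C != set0 by case: cC.
have neD : D != set0 by case: cD.
have notR : forall Y, Y != set0 -> Y \subset A :|: B -> Y \notin R.
  move=> Y /set0Pn[y yY] YAB; apply/negP => YR.
  by have := disjR Y y YR yY; rewrite (subsetP YAB _ yY).
have CAB : C \subset A :|: B by rewrite -CD subsetUl.
have DAB : D \subset A :|: B by rewrite -CD subsetUr.
have CR := notR C neC CAB; have DR := notR D neD DAB.
have nCD : C != D.
  apply: contraNneq neC => eCD; rewrite -subset0; apply/subsetP => y yC.
  by move: dCD => /disjointFr/(_ yC); rewrite -eCD yC.
have QE : Q :\ C :\ D = R.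
  apply/setP => X; rewrite !in_setD1 Qdef.
  case: (eqVneq X D) => [->|XD] /=; first by rewrite (negbTE DR).
  case: (eqVneq X C) => [->|XC] /=; first by rewrite (negbTE CR).
  by rewrite orbF.
have partQ : partition Q [set: T].
  apply/and3P; split.
  - apply/eqP/setP => x; rewrite inE; apply/bigcupP.
    have : x \in cover P by rewrite covP.
    case/bigcupP => X XP xX.
    case: (boolP (X \in R)) => XR; first by exists X => //; rewrite Qdef XR.
    have xAB : x \in C :|: D.
      rewrite CD in_setU; move: XR; rewrite Rdef XP andbT negb_and !negbK.
      by case/orP => /eqP <-; rewrite xX ?orbT.
    move: xAB; rewrite in_setU => /orP[xC|xD].
      by exists C => //; rewrite Qdef eqxx orbT.
    by exists D => //; rewrite Qdef eqxx !orbT.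
  - have dRY : forall X Y : {set T}, X \in R -> Y \subset A :|: B -> [disjoint X & Y].
      move=> X Y XR YAB; apply/pred0P => y /=; apply/negP => /andP[yX yY].
      by have := disjR X y XR yX; rewrite (subsetP YAB _ yY).
    apply/trivIsetP => X Y; rewrite !Qdef.
    move=> /or3P[XR|/eqP->|/eqP->] /or3P[YR|/eqP->|/eqP->] nXY.
    + by have [XP _ _] := RP X XR; have [YP _ _] := RP Y YR; exact: (trivIsetP trP).
    + exact: dRY.
    + exact: dRY.
    + by rewrite disjoint_sym; apply: dRY.
    + by rewrite eqxx in nXY.
    + exact: dCD.
    + by rewrite disjoint_sym; apply: dRY.
    + by rewrite disjoint_sym.
    + by rewrite eqxx in nXY.
  - rewrite Qdef !negb_or; apply/and3P; split.
      by apply: contra nP => /RP[].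
    by rewrite eq_sym.
    by rewrite eq_sym.
have cardQ : #|Q| = k.
  rewrite /Q cardsU cards2 nCD.
  have -> : R :&: [set C; D] = set0.
    apply/setP => X; rewrite in_setI in_set2 in_set0.
    case: (eqVneq X C) => [->|_]; first by rewrite (negbTE CR).
    case: (eqVneq X D) => [->|_]; first by rewrite (negbTE DR).
    by rewrite andbF.
  by rewrite cards0 subn0 cardR subnK.
have kQ : conn_kpart e k Q.
  split=> // X; rewrite Qdef => /or3P[XR|/eqP->|/eqP->] //.
  by have [XP _ _] := RP X XR; apply: connP.
split=> //.
  by split=> //; apply/and3P; split=> //; apply/eqP.
  apply: (contraNneq _ CR) => PQ.
  by rewrite Rdef nCA nCB PQ Qdef eqxx orbT.
exists A, B, C, D; split => //; first split => //.
- by rewrite Qdef eqxx orbT.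
- by rewrite Qdef eqxx !orbT.
- by rewrite QE RE.
Qed.
End Moves.


Section Fix.
Variables (T : finType) (e : rel T) (esym : symmetric e).
Notation ind := (induced_rel e).
Implicit Types (S Z X W A B C D : {set T}) (x y v : T) (P Q R : {set {set T}}).

Lemma kp_facts k P : conn_kpart e k P ->
  [/\ forall x, pblock P x \in P, forall x, x \in pblock P x,
      forall A x, A \in P -> x \in A -> pblock P x = A &
      forall A B x, A \in P -> B \in P -> x \in A -> x \in B -> A = B].
Proof.
move=> [/and3P[/eqP covP trP nP] cardP cP]; split.
- by move=> x; apply: pblock_mem; rewrite covP.
- by move=> x; rewrite mem_pblock covP.
- by move=> A x AP xA; apply: def_pblock.
- by move=> A B x AP BP xA xB; rewrite -(def_pblock trP AP xA) (def_pblock trP BP xB).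
Qed.

Lemma other k P A : conn_kpart e k P -> 2 <= k -> A \in P -> exists y, y \notin A.
Proof.
move=> kP k2 AP; have [bP xb _ uniqP] := kp_facts kP.
case: kP => [/and3P[_ _ nP] cardP cP].
have h := cardsD1 A P; rewrite AP cardP in h.
have : 0 < #|P :\ A| by move: k2; rewrite h add1n ltnS.
rewrite card_gt0 => /set0Pn[B]; rewrite in_setD1 => /andP[BA BP].
have /set0Pn[y yB] : B != set0 by apply: contraNneq nP => <-.
exists y; apply/negP => yA; by rewrite (uniqP _ _ _ BP AP yB yA) eqxx in BA.
Qed.

Lemma singleton_conn x : connected_in e [set x].
Proof.
split; first by apply/set0Pn; exists x; rewrite inE.
by move=> y z; rewrite !inE => /eqP-> /eqP->; exact: connect0.
Qed.

Lemma finalmove k P v A : conn_kpart e k P -> 2 <= k -> A \in P -> v \in A ->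
  A :\ v != set0 -> conn e (A :\ v) -> conn e ([set: T] :\ v) ->
  exists Q, recomb_move e k P Q /\ [set v] \in Q.
Proof.
move=> kP k2 AP vA neA cA cG.
have [bP xb defb uniqP] := kp_facts kP.
have [y yA] := other kP k2 AP.
have /set0Pn[x xA] := neA.
have yv : y \in [set: T] :\ v by rewrite !inE andbT; apply: contraNneq yA => ->.
have xv : x \in [set: T] :\ v by move: xA; rewrite !inE => /andP[-> _].
have xA' : x \in A by move: xA; rewrite in_setD1 => /andP[].
have /connP cGP := cG.
have [p [q [pA qA pq]]] := cross (cGP x y xv yv) xA' yA.
move: (pq); rewrite indE !in_setD1 !inE !andbT => /and3P[epq pv qv].
set B := pblock P q.
have BP := bP q; have qB := xb q.
have vB : v \notin B.
  apply/negP => vB; have := uniqP _ _ _ AP BP vA vB => AB.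
  by move: qA; rewrite AB qB.
have nAB : A != B by apply: contraNneq qA => ->.
have pAv : p \in A :\ v by rewrite in_setD1 pv pA.
have cB : connected_in e B by case: kP => _ _; apply.
have dD : connected_in e ((A :|: B) :\ v).
  apply: conn_to; first by apply/set0Pn; exists p; rewrite in_setD1 pv in_setU pA.
  apply: (hub_conn esym (h := p)); first by rewrite in_setD1 pv in_setU pA.
  move=> z; rewrite in_setD1 in_setU => /andP[zv /orP[zA|zB]].
    apply: (cmono (S := A :\ v)); first by apply/subsetP => t; rewrite !in_setD1 in_setU => /andP[-> ->].
    by have /connP := cA; apply => //; rewrite in_setD1 zv.
  apply: connect_trans (_ : connect _ z q) _.
    apply: (cmono (S := B)).
      apply/subsetP => t tB; rewrite in_setD1 in_setU tB orbT andbT.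
      by apply: contraNneq vB => <-.
    by have /connP := conn_of cB; apply.
  apply: connect1; rewrite indE esym epq !in_setD1 !in_setU pA qB pv qv !orbT.
  done.
have dis : [disjoint [set v] & (A :|: B) :\ v].
  by apply/pred0P => t /=; rewrite !inE; case: (t == v).
have un : [set v] :|: (A :|: B) :\ v = A :|: B.
  apply/setP => t; rewrite !inE; case: (eqVneq t v) => [->|] //=.
  by rewrite vA.
have nCA : [set v] != A.
  by apply/negP => /eqP vAe; move: neA; rewrite -vAe setDv eqxx.
have nCB : [set v] != B by apply: contraNneq vB => <-; rewrite inE.
have := swap kP AP BP nAB (singleton_conn v) dD dis un nCA nCB.
move=> mv; eexists; split; first exact: mv.
by rewrite in_setU in_set2 eqxx orbT.
Qed.
Lemma peel k P v A x : conn_kpart e k P -> 2 <= k -> A \in P -> v \in A -> x \in A :\ v ->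
  conn e ([set: T] :\ v) ->
  exists Q A', [/\ recomb_move e k P Q, A' \in Q, v \in A' &
                  A' :\ v = A :\ v :\: ccomp e (A :\ v) x].
Proof.
move=> kP k2 AP vA xAv cG.
have [bP xb defb uniqP] := kp_facts kP.
have cPP : forall B, B \in P -> connected_in e B by case: kP => _ _.
set K1 := ccomp e (A :\ v) x.
have K1def : forall t, (t \in K1) = (t \in A :\ v) && connect (ind (A :\ v)) x t.
  by move=> t; rewrite /K1 inE.
clearbody K1.
have K1A : forall t, t \in K1 -> [/\ t \in A, t != v & connect (ind (A :\ v)) x t].
  by move=> t; rewrite K1def in_setD1 => /andP[/andP[-> ->] ->].
have xK1 : x \in K1 by rewrite K1def xAv connect0.
have clK1 : forall p q, p \in K1 -> ind (A :\ v) p q -> q \in K1.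
  move=> p q pK pq; have [_ _ xp] := K1A p pK.
  rewrite K1def; move: (pq); rewrite indE => /and3P[_ _ ->] /=.
  exact: connect_trans xp (connect1 pq).
have cK1 : conn e K1.
  apply: (hub_conn esym xK1) => z zK; rewrite (csym esym).
  by have [_ _ xz] := K1A z zK; apply: crestrict clK1 xz xK1.
have [y yA] := other kP k2 AP.
have yv : y \in [set: T] :\ v by rewrite !inE andbT; apply: contraNneq yA => ->.
have [xA xv0 _] := K1A x xK1.
have xv : x \in [set: T] :\ v by rewrite !inE xv0.
have /connP cGP := cG.
have yK : y \notin K1 by apply: contra yA => /K1A[].
have [p [q [pK qK pq]]] := cross (cGP x y xv yv) xK1 yK.
move: (pq); rewrite indE !in_setD1 !inE !andbT => /and3P[epq pv qv].
have [pA _ _] := K1A p pK.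
have qA : q \notin A.
  apply/negP => qA; move/negP: qK; apply; apply: (clK1 p) => //.
  by rewrite indE epq !in_setD1 pA qA pv qv.
set B := pblock P q.
have BP := bP q; have qB := xb q.
have vB : v \notin B.
  apply/negP => vB; have := uniqP _ _ _ AP BP vA vB => AB.
  by move: qA; rewrite AB qB.
have nAB : A != B by apply: contraNneq qA => ->.
have AB0 : forall t, t \in A -> t \in B -> False.
  by move=> t tA tB; move/negP: nAB; apply; apply/eqP; apply: (uniqP _ _ t).
have cB := cPP B BP.
have cA := cPP A AP.
pose C := A :\: K1.
have vC : v \in C by rewrite inE vA andbT; apply/negP => /K1A[_ /eqP].
have dC : connected_in e C.
  apply: conn_to; first by apply/set0Pn; exists v.
  apply: (hub_conn esym vC) => z zC.
  case: (boolP (connect (ind C) z v)) => // nc; exfalso.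
  pose W := [set t in C | connect (ind C) z t].
  have zW : z \in W by rewrite inE zC connect0.
  have vW : v \notin W by rewrite inE (negbTE nc) andbF.
  have zA : z \in A by move: zC; rewrite inE => /andP[].
  have /connP cAP := conn_of cA.
  have [p' [q' [p'W q'W pq']]] := cross (cAP z v zA vA) zW vW.
  move: (pq'); rewrite indE => /and3P[epq' p'A q'A].
  have p'C : p' \in C by move: p'W; rewrite inE => /andP[].
  have q'K : q' \in K1.
    apply: contraNT q'W => q'K; rewrite inE.
    have q'C : q' \in C by rewrite inE q'K q'A.
    rewrite q'C /=; move: p'W; rewrite inE => /andP[_ zp'].
    by apply: connect_trans zp' (connect1 _); rewrite indE epq' p'C q'C.
  have p'v : p' != v by apply: contraNneq vW => <-.
  have [_ q'v _] := K1A q' q'K.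
  have : p' \in K1.
    apply: (clK1 q') => //; rewrite indE esym epq' !in_setD1 p'v q'v p'A q'A.
    done.
  by move: p'C; rewrite inE => /andP[/negP].
pose D := B :|: K1.
have dD : connected_in e D.
  apply: conn_to; first by apply/set0Pn; exists q; rewrite inE qB.
  have qD : q \in D by rewrite inE qB.
  apply: (hub_conn esym qD) => z; rewrite inE => /orP[zB|zK].
    apply: (cmono (S := B)); first exact: subsetUl.
    by have /connP := conn_of cB; apply.
  apply: connect_trans (_ : connect _ z p) _.
    apply: (cmono (S := K1)); first exact: subsetUr.
    by have /connP := cK1; apply.
  by apply: connect1; rewrite indE epq !inE qB pK orbT.
have dis : [disjoint C & D].
  apply/pred0P => t /=; rewrite !inE; apply/negP => /andP[/andP[tK tA] /orP[tB|tK']].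
    exact: (AB0 t).
  by rewrite tK' in tK.
have un : C :|: D = A :|: B.
  apply/setP => t; rewrite !inE.
  case: (boolP (t \in K1)) => tK /=; last by rewrite orbF.
  by have [-> _ _] := K1A t tK; rewrite !orbT.
have nCA : C != A.
  apply/negP => /eqP CA; have := xA; rewrite -CA inE xK1 //.
have nCB : C != B by apply: contraNneq vB => <-.
have mv := swap kP AP BP nAB dC dD dis un nCA nCB.
exists ((P :\ A :\ B) :|: [set C; D]), C; split => //.
  by rewrite in_setU in_set2 eqxx orbT.
apply/setP => t; rewrite !inE.
case: (eqVneq t v) => //= tv.
by rewrite K1def in_setD1 tv /= andbC.
Qed.
Definition hub (A : {set T}) h :=
  [exists x in A :\ h, exists y in A :\ h, exists z in A :\ h,
    [&& ~~ connect (ind (A :\ h)) x y, ~~ connect (ind (A :\ h)) y z & ~~ connect (ind (A :\ h)) x z]].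

Lemma fix_part k P v : conn_kpart e k P -> 2 <= k -> conn e ([set: T] :\ v) ->
  ~~ hub (pblock P v) v -> exists Q, recomb_within e k 3 P Q /\ [set v] \in Q.
Proof.
move=> kP k2 cG nh.
have [bP xb defb uniqP] := kp_facts kP.
set A := pblock P v; have AP : A \in P := bP v; have vA : v \in A := xb v.
move: nh; rewrite -/A => nh.
clearbody A.
case: (eqVneq (A :\ v) set0) => [A0|neA].
  exists P; split; first by left.
  suff <- : A = [set v] by [].
  apply/setP => t; rewrite inE; case: (eqVneq t v) => [->//|tv].
  have : (t \in A :\ v) = false by rewrite A0 in_set0.
  by rewrite in_setD1 tv.
case: (boolP (conn e (A :\ v))) => cA.
  have [Q [mv vQ]] := finalmove kP k2 AP vA neA cA cG.
  by exists Q; split => //; right; exists Q; split => //; left.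
move: (cA); rewrite /conn => /forall_inPn[x xS /forall_inPn[y yS nxy]].
have [Q1 [A' [mv A'Q vA' A'E]]] := peel kP k2 AP vA xS cG.
set K1 := ccomp e (A :\ v) x in A'E.
have R'def : forall t, (t \in A' :\ v) = (t \in A :\ v) && ~~ connect (ind (A :\ v)) x t.
  by move=> t; rewrite A'E /K1 !inE; case: (t \in A); case: (t == v); rewrite /= ?andbF ?andbT.
have neA' : A' :\ v != set0 by apply/set0Pn; exists y; rewrite R'def yS.
have cA' : conn e (A' :\ v).
  apply/connP => s t; rewrite !R'def => /andP[sA nxs] /andP[tA nxt].
  have st : connect (ind (A :\ v)) s t.
    move: nh; rewrite /hub => /existsPn/(_ x); rewrite xS /= => /existsPn/(_ s).
    by rewrite sA /= => /existsPn/(_ t); rewrite tA nxs nxt /= andbT negbK.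
  apply: (crestrict (Z := A' :\ v)) st _; last by rewrite R'def sA nxs.
  move=> p q; rewrite !R'def => /andP[pA nxp] pq.
  move: (pq); rewrite indE => /and3P[_ _ ->] /=.
  apply: contra nxp => xq; apply: connect_trans xq _.
  by rewrite (csym esym); apply: connect1.
have kQ1 : conn_kpart e k Q1 by case: mv.
have [Q2 [mv2 vQ2]] := finalmove kQ1 k2 A'Q vA' neA' cA' cG.
exists Q2; split => //; right; exists Q1; split => //; right; exists Q2; split => //; by left.
Qed.
End Fix.


Section Count.
Variables (T : finType) (e : rel T) (esym : symmetric e).
Notation ind := (induced_rel e).
Implicit Types (S Z X W A B C D : {set T}) (x y v : T).

Lemma hub_nconn A h : hub e A h -> ~~ conn e (A :\ h).
Proof.
case/existsP => x /andP[xA /existsP[y /andP[yA /existsP[z /andP[zA /and3P[nxy _ _]]]]]].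
by apply/negP => /connP/(_ x y xA yA); apply/negP.
Qed.

Lemma conn_small S : #|S| <= 1 -> conn e S.
Proof.
move=> cS; apply/connP => x y xS yS.
have -> : x = y by apply: (card_le1_eqP cS).
exact: connect0.
Qed.

Lemma L2 A r a : hub e A a -> conn e (A :\ r :\ a) -> False.
Proof.
case/existsP => x /andP[xA /existsP[y /andP[yA /existsP[z /andP[zA /and3P[nxy nyz nxz]]]]]].
move/connP => cA'.
have sub : A :\ r :\ a \subset A :\ a.
  by apply/subsetP => t; rewrite !in_setD1 => /and3P[-> _ ->].
have mem : forall t, t \in A :\ a -> t != r -> t \in A :\ r :\ a.
  by move=> t; rewrite !in_setD1 => /andP[-> ->] ->.
have nc : forall s t, s \in A :\ a -> t \in A :\ a -> s != r -> t != r ->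
    ~~ connect (ind (A :\ a)) s t -> False.
  move=> s t sA tA sr tr; apply/negP/negPn.
  by apply: (cmono sub); apply: cA'; apply: mem.
case: (eqVneq x r) => [xr|xr].
  have yr : y != r by apply: contraNneq nxy => ->; rewrite xr connect0.
  have zr : z != r by apply: contraNneq nxz => ->; rewrite xr connect0.
  exact: (nc y z yA zA yr zr nyz).
case: (eqVneq y r) => [yr|yr].
  have zr : z != r by apply: contraNneq nyz => ->; rewrite yr connect0.
  exact: (nc x z xA zA xr zr nxz).
exact: (nc x y xA yA xr yr nxy).
Qed.

Lemma L1 A r h b : h \in A :\ r -> b \in A :\ r :\ h -> e r b -> r \in A ->
  (hub e A h -> hub e (A :\ r) h) /\ (conn e (A :\ r :\ h) -> conn e (A :\ h)).
Proof.
move=> hA' bA' erb rA.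
have rh : r != h by move: hA'; rewrite in_setD1 eq_sym => /andP[].
pose g w := if w == r then b else w.
have bAh : b \in A :\ h by move: bA'; rewrite !in_setD1 => /and3P[-> _ ->].
have rAh : r \in A :\ h by rewrite in_setD1 rh rA.
have gin : forall w, w \in A :\ h -> g w \in A :\ r :\ h.
  move=> w wA; rewrite /g; case: (eqVneq w r) => [_|wr] //.
  by move: wA; rewrite !in_setD1 wr => /andP[-> ->].
have gc : forall w, w \in A :\ h -> connect (ind (A :\ h)) w (g w).
  move=> w wA; rewrite /g; case: (eqVneq w r) => [->|wr]; last exact: connect0.
  by apply: connect1; rewrite indE erb rAh bAh.
have sub : A :\ r :\ h \subset A :\ h.
  by apply/subsetP => t; rewrite !in_setD1 => /and3P[-> _ ->].
have back : forall s t, s \in A :\ h -> t \in A :\ h ->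
    connect (ind (A :\ r :\ h)) (g s) (g t) -> connect (ind (A :\ h)) s t.
  move=> s t sA tA c; apply: connect_trans (gc s sA) _.
  apply: connect_trans (cmono sub c) _; rewrite (csym esym); exact: gc.
split.
  case/existsP => x /andP[xA /existsP[y /andP[yA /existsP[z /andP[zA /and3P[nxy nyz nxz]]]]]].
  apply/existsP; exists (g x); rewrite gin //=.
  apply/existsP; exists (g y); rewrite gin //=.
  apply/existsP; exists (g z); rewrite gin //=.
  apply/and3P; split; apply/negP => c.
  - by move/negP: nxy; apply; apply: back c.
  - by move/negP: nyz; apply; apply: back c.
  - by move/negP: nxz; apply; apply: back c.
move/connP => cA'; apply/connP => s t sA tA.
by apply: back => //; apply: cA'; apply: gin.
Qed.

Lemma Fcount n A : #|A| = n.+2 -> conn e A ->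
  #|[set h in A | hub e A h]| + 2 <= #|[set h in A | conn e (A :\ h)]|.
Proof.
elim: n A => [|n IH] A cardA cA.
  have c1 : forall h, h \in A -> conn e (A :\ h).
    move=> h hA; apply: conn_small.
    by have := cardsD1 h A; rewrite hA cardA add1n => -[<-].
  have -> : [set h in A | hub e A h] = set0.
    apply/setP => h; rewrite !inE; case hA: (h \in A); rewrite ?andFb ?andTb //.
    by apply/negbTE/negP => hh; have := hub_nconn hh; rewrite c1.
  have -> : [set h in A | conn e (A :\ h)] = A.
    by apply/setP => h; rewrite !inE; case hA: (h \in A); rewrite ?andFb ?andTb // c1.
  by rewrite cards0 cardA.
have c2 : 1 < #|A| by rewrite cardA.
have [c [x [cA' xAc H]]] := GL esym cA c2.
have cr : conn e (A :\ x) by apply: H; rewrite inE xAc connect0.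
have xA : x \in A by move: xAc; rewrite in_setD1 => /andP[].
set r := x in cr xA; clearbody r; clear H xAc.
set A' := A :\ r.
have cardA' : #|A'| = n.+2 by have := cardsD1 r A; rewrite xA cardA add1n => -[].
have IH' := IH A' cardA' cr.
set HA := [set h in A | hub e A h] in IH' *.
set HA' := [set h in A' | hub e A' h] in IH' *.
set LA := [set h in A | conn e (A :\ h)].
set LA' := [set h in A' | conn e (A' :\ h)] in IH' *.
have rLA : r \in LA by rewrite inE xA cr.
have rLA' : r \notin LA' by rewrite inE in_setD1 eqxx.
have hA'E : forall h, h \in A -> h != r -> h \in A' by move=> h hA hr; rewrite in_setD1 hr hA.
have rHA : r \notin HA by rewrite inE xA andTb; apply/negP => hh; have := hub_nconn hh; rewrite cr.
set N := [set b in A' | e r b].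
have [a aN] : exists a, a \in N.
  have : 0 < #|A'| by rewrite cardA'.
  rewrite card_gt0 => /set0Pn[t tA'].
  have tA : t \in A by move: tA'; rewrite in_setD1 => /andP[].
  have /connP cAP := cA.
  have rX : r \in [set r] by rewrite inE.
  have tX : t \notin [set r] by move: tA'; rewrite in_setD1 inE => /andP[].
  have [p [q [pX qX pq]]] := cross (cAP r t xA tA) rX tX.
  move: pX; rewrite inE => /eqP pr; subst p.
  exists q; move: pq; rewrite indE => /and3P[erq _ qA].
  by rewrite inE erq andbT in_setD1 qA andbT; move: qX; rewrite inE.
have Nmem : forall b, b \in N -> b \in A' /\ e r b by move=> b; rewrite inE => /andP[].
have L1' : forall h b, h \in A' -> b \in N -> b != h ->
    (hub e A h -> hub e A' h) /\ (conn e (A' :\ h) -> conn e (A :\ h)).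
  move=> h b hA' bN bh; have [bA' erb] := Nmem b bN.
  have bA'h : b \in A' :\ h by rewrite in_setD1 bh bA'.
  exact: (L1 hA' bA'h erb xA).
have HAr : forall h, h \in HA -> h \in A' /\ hub e A h.
  move=> h hH; have := hH; rewrite inE => /andP[hA hh]; split => //.
  by apply: hA'E => //; apply: contraNneq rHA => <-.
case: (ltnP 1 #|N|) => [N2|N1].
  have other : forall h, exists2 b, b \in N & b != h.
    move=> h; have := cardsD1 h N => cN.
    have : 0 < #|N :\ h|.
      by move: N2; rewrite cN; case: (h \in N) => /=; [rewrite add1n ltnS | rewrite add0n => /ltnW].
    by rewrite card_gt0 => /set0Pn[b]; rewrite in_setD1 => /andP[bh bN]; exists b.
  have sH : HA \subset HA'.
    apply/subsetP => h /HAr[hA' hh]; have [b bN bh] := other h.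
    by rewrite inE hA' /=; apply: (proj1 (L1' h b hA' bN bh)).
  have pL : LA' \proper LA.
    rewrite properE; apply/andP; split; last by apply/subsetPn; exists r.
    apply/subsetP => h; rewrite inE => /andP[hA' ch]; have [b bN bh] := other h.
    rewrite inE (proj2 (L1' h b hA' bN bh) ch) andbT.
    by move: hA'; rewrite in_setD1 => /andP[].
  apply: leq_trans (proper_card pL).
  apply: leq_trans (leqnSn _); apply: leq_trans IH'; by rewrite leq_add2r subset_leq_card.
have onlya : forall b, b \in N -> b = a by move=> b bN; apply: (card_le1_eqP N1).
have [aA' era] := Nmem a aN.
have L1a : forall h, h \in A' -> h != a -> (hub e A h -> hub e A' h) /\ (conn e (A' :\ h) -> conn e (A :\ h)).
  by move=> h hA' ha; apply: (L1' h a hA' aN); rewrite eq_sym.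
have LAmem : forall h, h \in A' -> conn e (A :\ h) -> h \in LA.
  by move=> h; rewrite in_setD1 => /andP[_ hA] ch; rewrite inE hA ch.
case: (boolP (hub e A a)) => ha.
  have aLA' : a \notin LA'.
    by rewrite inE aA' andTb; apply/negP => ca; apply: (L2 ha ca).
  have pL : LA' \proper LA.
    rewrite properE; apply/andP; split; last by apply/subsetPn; exists r.
    apply/subsetP => h; rewrite inE => /andP[hA' ch].
    have hna : h != a by apply: contraNneq aLA' => <-; rewrite inE hA' ch.
    exact: (LAmem h hA' (proj2 (L1a h hA' hna) ch)).
  have sH : HA \subset a |: HA'.
    apply/subsetP => h /HAr[hA' hh]; rewrite in_setU1.
    case: (eqVneq h a) => //= hna.
    by rewrite inE hA' andTb; apply: (proj1 (L1a h hA' hna)).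
  have c1 : #|HA| <= #|HA'| + 1.
    apply: leq_trans (subset_leq_card sH) _; rewrite cardsU1 addnC leq_add2l.
    by case: (a \notin HA').
  have pc := proper_card pL.
  apply: leq_trans (_ : #|HA'| + 1 + 2 <= _); first by rewrite leq_add2r.
  apply: leq_trans pc; by rewrite -addnA (addnC 1) addnA addn1 ltnS.
have sH : HA \subset HA'.
  apply/subsetP => h /HAr[hA' hh].
  have hna : h != a by apply: contraNneq ha => <-.
  by rewrite inE hA' andTb; apply: (proj1 (L1a h hA' hna)).
have sL : r |: (LA' :\ a) \subset LA.
  apply/subsetP => h; rewrite in_setU1 => /orP[/eqP->//|]; rewrite in_setD1 => /andP[hna].
  rewrite inE => /andP[hA' ch]; exact: (LAmem h hA' (proj2 (L1a h hA' hna) ch)).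
have c1 : #|LA'| <= #|r |: (LA' :\ a)|.
  rewrite cardsU1 in_setD1 (negbTE rLA') andbF /= (cardsD1 a LA') add1n.
  by case: (a \in LA').
apply: leq_trans (subset_leq_card sL); apply: leq_trans c1.
apply: leq_trans IH'; by rewrite leq_add2r subset_leq_card.
Qed.

End Count.


Section Glob.
Variables (T : finType) (e : rel T) (esym : symmetric e).
Notation ind := (induced_rel e).
Implicit Types (S Z X W A B C D : {set T}) (x y v : T).

Lemma transfer A A' u (f : T -> T) : A' \subset A ->
  (forall w, w \in A :\ u -> f w \in A' :\ u /\ connect (ind (A :\ u)) w (f w)) ->
  (hub e A u -> hub e A' u) /\ (conn e (A' :\ u) -> conn e (A :\ u)).
Proof.
move=> sA fP.
have sub : A' :\ u \subset A :\ u.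
  by apply/subsetP => t; rewrite !in_setD1 => /andP[-> /(subsetP sA) ->].
have back : forall s t, s \in A :\ u -> t \in A :\ u ->
    connect (ind (A' :\ u)) (f s) (f t) -> connect (ind (A :\ u)) s t.
  move=> s t sA' tA' c; apply: connect_trans (proj2 (fP s sA')) _.
  apply: connect_trans (cmono sub c) _; rewrite (csym esym); exact: (proj2 (fP t tA')).
split.
  case/existsP => x /andP[xA /existsP[y /andP[yA /existsP[z /andP[zA /and3P[nxy nyz nxz]]]]]].
  apply/existsP; exists (f x); rewrite (proj1 (fP x xA)) /=.
  apply/existsP; exists (f y); rewrite (proj1 (fP y yA)) /=.
  apply/existsP; exists (f z); rewrite (proj1 (fP z zA)) /=.
  apply/and3P; split; apply/negP => c.
  - by move/negP: nxy; apply; apply: back c.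
  - by move/negP: nyz; apply; apply: back c.
  - by move/negP: nxz; apply; apply: back c.
move/connP => cA'; apply/connP => s t sA' tA'.
by apply: back => //; apply: cA'; [exact: (proj1 (fP s sA')) | exact: (proj1 (fP t tA'))].
Qed.

Variables (c : T) (U : {set T}).
Hypothesis cU : c \notin U.
Hypothesis U2 : forall y z, y \in U -> z != c -> e y z -> z \in U.

Lemma reachU s0 s : s0 \in U -> connect (ind ([set: T] :\ c)) s0 s -> s \in U.
Proof.
move=> s0U /connectP[p pth ->]; elim: p s0 s0U pth => [|w p IH] s0 s0U //=.
case/andP => sw pth; apply: (IH w _ pth); move: sw; rewrite indE !in_setD1 => /and3P[esw _ /andP[wc _]].
exact: (U2 s0U wc esw).
Qed.

Lemma district D : conn e D ->
  #|[set u in U :&: D | hub e D u]| + ([set u in U :&: D | hub e D u] != set0)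
   <= #|[set u in U :&: D | ~~ hub e D u]|.
Proof.
move=> cD.
set H := [set u in U :&: D | hub e D u]; set N := [set u in U :&: D | ~~ hub e D u].
case: (eqVneq H set0) => [->|neH]; first by rewrite cards0.
have [u0 u0H] := set0Pn _ neH.
have [u0UD hu0] : u0 \in U :&: D /\ hub e D u0 by move: u0H; rewrite inE => /andP[].
have [u0U u0D] : u0 \in U /\ u0 \in D by move: u0UD; rewrite inE => /andP[].
rewrite addn1.
case: (boolP (c \in D)) => cD'; last first.
  have DU : D \subset U.
    apply/subsetP => t tD.
    have /connP cDP := cD.
    have ct := cDP u0 t u0D tD.
    have ct' : connect (ind ([set: T] :\ c)) u0 t.
      apply: (cmono _ ct); apply/subsetP => s sD; rewrite !inE andbT.
      by apply: contraNneq cD' => <-.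
    exact: reachU u0U ct'.
  have D2 : 1 < #|D|.
    rewrite ltnNge; apply/negP => D1.
    have := hub_nconn hu0; rewrite conn_small //.
    by apply: leq_trans D1; apply: subset_leq_card; apply: subD1set.
  have cardD : #|D| = (#|D| - 2).+2 by rewrite -addn2 subnK.
  have FC := Fcount esym cardD cD.
  have HE : H = [set h in D | hub e D h].
    by apply/setP => t; rewrite !inE; case tD: (t \in D); rewrite ?andbF // (subsetP DU _ tD).
  have LN : [set h in D | conn e (D :\ h)] \subset N.
    apply/subsetP => t; rewrite !inE => /andP[tD ct]; rewrite tD (subsetP DU _ tD) /=.
    by apply/negP => ht; have := hub_nconn ht; rewrite ct.
  rewrite HE; apply: leq_trans (subset_leq_card LN).
  by apply: leq_trans FC; rewrite addn2.
have /connP cDP := cD.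
pose D' := c |: (U :&: D).
have D'D : D' \subset D.
  apply/subsetP => t; rewrite in_setU1 => /orP[/eqP->//|].
  by rewrite inE => /andP[].
have cD'c : conn e D'.
  have cD'D : c \in D' by rewrite in_setU1 eqxx.
  apply: (hub_conn esym cD'D) => t tD'.
  case: (boolP (connect (ind D') t c)) => // nc; exfalso.
  pose Wt := [set s in D' | connect (ind D') t s].
  have tW : t \in Wt by rewrite inE tD' connect0.
  have cW : c \notin Wt by rewrite inE (negbTE nc) andbF.
  have tD : t \in D by apply: (subsetP D'D).
  have [p [q [pW qW pq]]] := cross (cDP t c tD cD') tW cW.
  move: (pq); rewrite indE => /and3P[epq pD qD].
  have [pD' tp] : p \in D' /\ connect (ind D') t p by move: pW; rewrite inE => /andP[].
  have pc : p != c by apply: contraNneq cW => <-.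
  have pU : p \in U by move: pD'; rewrite in_setU1 (negbTE pc) inE => /andP[].
  have qD' : q \in D'.
    rewrite in_setU1; case: (eqVneq q c) => //= qc.
    by rewrite inE qD (U2 pU qc epq).
  by move/negP: qW; apply; rewrite inE qD' (connect_trans tp (connect1 _)) // indE epq pD' qD'.
have u0D' : u0 \in D' by rewrite in_setU1 u0UD orbT.
have u0c : u0 != c by apply: contraNneq cU => <-.
have D'2 : 1 < #|D'|.
  by rewrite /D' cardsU1 (_ : c \notin U :&: D) ?add1n ?ltnS ?card_gt0; [apply/set0Pn; exists u0 | rewrite inE (negbTE cU)].
have cardD' : #|D'| = (#|D'| - 2).+2 by rewrite -addn2 subnK.
have FC := Fcount esym cardD' cD'c.
pose f w := if w \in D' then w else c.
have fP : forall u, u \in U :&: D -> forall w, w \in D :\ u -> f w \in D' :\ u /\ connect (ind (D :\ u)) w (f w).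
  move=> u uUD w wDu; have uU : u \in U by move: uUD; rewrite inE => /andP[].
  have cu : c != u by apply: contraNneq cU => ->.
  rewrite /f; case: (boolP (w \in D')) => wD'.
    by split; [rewrite in_setD1 wD' andbT; move: wDu; rewrite in_setD1 => /andP[] | exact: connect0].
  split; first by rewrite in_setD1 cu in_setU1 eqxx.
  have wD : w \in D by move: wDu; rewrite in_setD1 => /andP[].
  have wU : w \notin U by move: wD'; rewrite in_setU1 inE wD andbT negb_or => /andP[].
  have wc : w != c by apply: contraNneq wD' => ->; rewrite in_setU1 eqxx.
  pose Z := D :\: U.
  have ZD : Z \subset D :\ u.
    apply/subsetP => t; rewrite !inE => /andP[tU ->]; rewrite andbT.
    by apply: contraNneq tU => ->.
  apply: (cmono ZD).
  case: (boolP (connect (ind Z) w c)) => // nc; exfalso.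
  pose Wt := [set s in Z | connect (ind Z) w s].
  have wW : w \in Wt by rewrite !inE wU wD connect0.
  have cW : c \notin Wt by rewrite inE (negbTE nc) andbF.
  have [p [q [pW qW pq]]] := cross (cDP w c wD cD') wW cW.
  move: (pq); rewrite indE => /and3P[epq pD qD].
  have [pZ wp] : p \in Z /\ connect (ind Z) w p by move: pW; rewrite inE => /andP[].
  have pc : p != c by apply: contraNneq cW => <-.
  have pU : p \notin U by move: pZ; rewrite inE => /andP[].
  have qU : q \in U.
    apply: contraNT qW => qU; have qZ : q \in Z by rewrite inE qU qD.
    by rewrite inE qZ (connect_trans wp (connect1 _)) // indE epq pZ qZ.
  by move/negP: pU; apply; apply: (U2 qU pc); rewrite esym.
have hD : forall u, u \in U :&: D -> (hub e D u -> hub e D' u) /\ (conn e (D' :\ u) -> conn e (D :\ u)).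
  by move=> u uUD; apply: (transfer D'D (fP u uUD)).
have i1 : #|H| <= #|[set h in D' | hub e D' h]|.
  apply: subset_leq_card; apply/subsetP => t; rewrite /H in_set => /andP[tUD ht].
  by rewrite inE (proj1 (hD t tUD) ht) andbT in_setU1 tUD orbT.
have i3 := cardsD1 c [set h in D' | conn e (D' :\ h)].
have i4 : #|[set h in D' | conn e (D' :\ h)] :\ c| <= #|N|.
  apply: subset_leq_card; apply/subsetP => t; rewrite in_setD1 inE => /andP[tc /andP[tD' ct]].
  have tUD : t \in U :&: D by move: tD'; rewrite in_setU1 (negbTE tc).
  rewrite inE tUD /=; apply/negP => ht.
  by have := hub_nconn ht; rewrite (proj2 (hD t tUD) ct).
apply: leq_trans i4.
have : #|[set h in D' | hub e D' h]| + 2 <= #|[set h in D' | conn e (D' :\ h)] :\ c| + 1.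
  apply: leq_trans FC _; rewrite i3 addnC leq_add2l; by case: (_ \in _).
rewrite addn2 addn1 ltnS => i2.
by apply: leq_trans i2; rewrite ltnS.
Qed.

Lemma card_sum P X : partition P [set: T] -> #|X| = \sum_(D in P) #|X :&: D|.
Proof.
case/and3P => /eqP covP trP _.
rewrite -sum1_card (eq_bigl (fun x => (x \in cover P) && (x \in X))); last first.
  by move=> x; rewrite covP inE.
rewrite big_trivIset_cond //; apply: eq_bigr => D _.
by rewrite -sum1_card; apply: eq_bigl => x; rewrite inE andbC.
Qed.

Lemma gcount k P : conn_kpart e k P ->
  #|[set u in U | hub e (pblock P u) u]| + ([set u in U | hub e (pblock P u) u] != set0)
   <= #|U :\: [set u in U | hub e (pblock P u) u]|.
Proof.
move=> kP; have [bP xb defb uniqP] := kp_facts kP.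
have [partP _ cP] := kP.
set H := [set u in U | hub e (pblock P u) u].
have HD : forall D, D \in P -> H :&: D = [set u in U :&: D | hub e D u].
  move=> D DP; apply/setP => u; rewrite /H !inE.
  case uD: (u \in D); rewrite ?andbF ?andbT //.
  by rewrite (defb D u DP uD).
have ND : forall D, D \in P -> (U :\: H) :&: D = [set u in U :&: D | ~~ hub e D u].
  move=> D DP; apply/setP => u; rewrite /H !inE.
  case uD: (u \in D); rewrite ?andbF ?andbT //.
  by rewrite (defb D u DP uD); case: (u \in U); rewrite ?andbF ?andbT.
rewrite (card_sum H partP) (card_sum (U :\: H) partP).
apply: leq_trans (_ : \sum_(D in P) (#|H :&: D| + (H :&: D != set0)) <= _).
  rewrite big_split /= leq_add2l.
  case: (eqVneq H set0) => [->//|/set0Pn[u uH]].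
  rewrite (bigD1 (pblock P u)) //=; apply: leq_trans (leq_addr _ _).
  by rewrite lt0b; apply/set0Pn; exists u; rewrite inE uH xb.
apply: leq_sum => D DP; rewrite HD // ND //.
apply: district; exact: conn_of (cP D DP).
Qed.

End Glob.


Lemma arith (a b u : nat) (p q : bool) :
  a + p <= u - a -> b + q <= u - b -> u <= a + b -> 0 < u ->
  (p = (0 < a)) -> (q = (0 < b)) -> False.
Proof. move=> h1 h2 h3 h4 hp hq; subst p q; move: h1 h2; case: (ltnP 0 a); case: (ltnP 0 b) => /= *; lia. Qed.

Theorem mainTheorem2 (T : finType) (e : rel T) (k : nat)
  (P1 P2 : {set {set T}}) :
  simple_graph e -> connected_graph e -> 2 <= k ->
  conn_kpart e k P1 -> conn_kpart e k P2 ->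
  exists v : T, block_vertex e v /\
    (exists Q1, recomb_within e k 3 P1 Q1 /\ [set v] \in Q1) /\
    (exists Q2, recomb_within e k 3 P2 Q2 /\ [set v] \in Q2).
Proof.
move=> [esym _] cG k2 kP1 kP2.
have cT : conn e [set: T] by apply: conn_of.
have T2 : 1 < #|[set: T]|.
  have [_ cardP1 _] := kP1.
  have : 0 < #|P1| by rewrite cardP1; apply: leq_trans k2.
  rewrite card_gt0 => /set0Pn[A AP].
  have [/and3P[_ _ nP] _ _] := kP1.
  have /set0Pn[x xA] : A != set0 by apply: contraNneq nP => <-.
  have [y yA] := other kP1 k2 AP.
  have xy : x != y by apply: contraNneq yA => <-.
  apply: leq_trans (_ : #|[set x; y]| <= _); first by rewrite cards2 xy.
  by apply: subset_leq_card; apply/subsetP => t; rewrite inE.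
have [c [x0 [_ x0c Hu]]] := GL esym cT T2.
set U := ccomp e ([set: T] :\ c) x0 in Hu.
have Udef : forall t, (t \in U) = (t != c) && connect (induced_rel e ([set: T] :\ c)) x0 t.
  by move=> t; rewrite /U /ccomp !inE andbT.
clearbody U.
have cU : c \notin U by rewrite Udef eqxx.
have x0U : x0 \in U by rewrite Udef connect0 andbT; move: x0c; rewrite !inE andbT.
have U2 : forall y z, y \in U -> z != c -> e y z -> z \in U.
  move=> y z; rewrite !Udef => /andP[yc x0y] zc eyz; rewrite zc /=.
  by apply: connect_trans x0y (connect1 _); rewrite indE eyz !inE yc zc.
have g1 := gcount esym cU U2 kP1.
have g2 := gcount esym cU U2 kP2.
set H1 := [set u in U | hub e (pblock P1 u) u] in g1.
set H2 := [set u in U | hub e (pblock P2 u) u] in g2.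
have H1def : forall u, (u \in H1) = (u \in U) && hub e (pblock P1 u) u by move=> u; rewrite /H1 inE.
have H2def : forall u, (u \in H2) = (u \in U) && hub e (pblock P2 u) u by move=> u; rewrite /H2 inE.
clearbody H1 H2.
case: (boolP [exists v in U, (v \notin H1) && (v \notin H2)]).
  case/exists_inP => v vU /andP[vH1 vH2].
  have cv := Hu v vU.
  have nh1 : ~~ hub e (pblock P1 v) v by move: vH1; rewrite H1def vU.
  have nh2 : ~~ hub e (pblock P2 v) v by move: vH2; rewrite H2def vU.
  exists v; split; first exact: (@NC T e esym v cv).
  split; [exact: (@fix_part T e esym k P1 v kP1 k2 cv nh1) | exact: (@fix_part T e esym k P2 v kP2 k2 cv nh2)].
move/exists_inPn => all.
exfalso.
have H1U : H1 \subset U by apply/subsetP => t; rewrite H1def => /andP[].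
have H2U : H2 \subset U by apply/subsetP => t; rewrite H2def => /andP[].
have c1 : #|U :\: H1| = #|U| - #|H1| by exact: cardsDS H1U.
have c2 : #|U :\: H2| = #|U| - #|H2| by exact: cardsDS H2U.
have sU : U \subset H1 :|: H2.
  apply/subsetP => t tU; have := all t tU.
  by rewrite negb_and !negbK in_setU.
have c5 : #|H1 :|: H2| <= #|H1| + #|H2| by rewrite cardsU leq_subr.
have c3 : #|U| <= #|H1| + #|H2| := leq_trans (subset_leq_card sU) c5.
have c4 : 0 < #|U| by rewrite card_gt0; apply/set0Pn; exists x0.
rewrite c1 in g1; rewrite c2 in g2.
rewrite -card_gt0 in g1; rewrite -card_gt0 in g2.
move: g1 g2 c3 c4; move: #|H1| #|H2| #|U| => a b u g1 g2 c3 c4.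
exact: (arith g1 g2 c3 c4).
Qed.
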